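(* Let $A\in\mathbb{R}^{n\times n}$ be symmetric and positive definite, and let $i_1,\dots,i_n$ be any ordering of the indices $\{1,\dots,n\}$. Define $A^{(1)}=A$ and, for $k=1,\dots,n$, let $a^{(k)}$ denote the $i_k$-th row of $A^{(k)}$ (as a column vector), set $$x_k=\frac{a^{(k)}}{\sqrt{A^{(k)}_{i_ki_k}}},\qquad A^{(k+1)}=A^{(k)}-x_kx_k^{T}.$$ Then every pivot $A^{(k)}_{i_ki_k}$ is positive, and the resulting vectors satisfy $$\sum_{k=1}^n x_kx_k^{*}=A\qquad\text{and}\qquad \sum_{k=1}^n\|x_k\|_1^2\leq n\cdot\operatorname{tr}(A).$$
   Context: $\|x\|_1=\sum_i|x_i|$ denotes the $\ell^1$-norm of a vector. *)

(* Defs.v *)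
From HB Require Import structures.
From mathcomp Require Import all_boot all_order all_algebra all_fingroup.
From mathcomp Require Import reals.
Set Implicit Arguments. Unset Strict Implicit. Unset Printing Implicit Defensive.
Import Order.TTheory GRing.Theory Num.Theory.
Local Open Scope ring_scope.

Definition sym_mx (R : realType) n (A : 'M[R]_n) : Prop := A^T = A.
Definition posdef_mx (R : realType) n (A : 'M[R]_n) : Prop :=
  forall v : 'cV[R]_n, v != 0 -> 0 < (v^T *m A *m v) 0 0.

Definition chol_vec (R : realType) n (B : 'M[R]_n) (i : 'I_n) : 'cV[R]_n :=
  \col_j (B i j / Num.sqrt (B i i)).

Definition chol_step (R : realType) n (B : 'M[R]_n) (i : 'I_n) : 'M[R]_n :=
  B - chol_vec B i *m (chol_vec B i)^T.

Definition chol_mat (R : realType) n (A : 'M[R]_n) (l : seq 'I_n) : 'M[R]_n :=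
  foldl (@chol_step R n) A l.

Definition l1norm (R : realType) n (v : 'cV[R]_n) : R := \sum_j `|v j 0|.

(* Main.v *)
Require Import Defs.
From HB Require Import structures.
From mathcomp Require Import all_boot all_order all_algebra all_fingroup.
From mathcomp Require Import reals.
From mathcomp Require Import ring lra.
Import Order.TTheory GRing.Theory Num.Theory.
Local Open Scope ring_scope.

Section Aux.
Variable R : realType.
Variable n : nat.

Definition qf (B : 'M[R]_n) (v : 'cV[R]_n) : R := (v^T *m B *m v) 0 0.

Lemma qfE B v : qf B v = \sum_b (\sum_a v a 0 * B a b) * v b 0.
Proof.
rewrite /qf mxE; apply: eq_bigr => b _; rewrite !mxE; congr (_ * _).
by apply: eq_bigr => a _; rewrite mxE.
Qed.

Lemma sum_delta (i : 'I_n) (F : 'I_n -> R) :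
  \sum_a (a == i)%:R * F a = F i.
Proof.
rewrite (bigD1 i) //= eqxx mul1r big1 ?addr0 // => a /negbTE ->.
by rewrite mul0r.
Qed.

Lemma sum_delta' (i : 'I_n) (F : 'I_n -> R) :
  \sum_a F a * (a == i)%:R = F i.
Proof.
rewrite -[RHS](sum_delta i); apply: eq_bigr => a _; exact: mulrC.
Qed.

Lemma stepE (B : 'M[R]_n) i a b :
  chol_step B i a b = B a b - B i a / Num.sqrt (B i i) * (B i b / Num.sqrt (B i i)).
Proof. by rewrite /chol_step /chol_vec !mxE big_ord1 !mxE. Qed.

Lemma qf_step (B : 'M[R]_n) i (v : 'cV[R]_n) :
  B^T = B -> 0 < B i i ->
  qf (chol_step B i) v =
  qf B (\col_a (v a 0 - (a == i)%:R * ((\sum_b B i b * v b 0) / B i i))).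
Proof.
move=> sB pos.
have Bs a b : B a b = B b a by rewrite -{1}sB mxE.
set c := Num.sqrt (B i i).
have c2 : c ^+ 2 = B i i by rewrite sqr_sqrtr // ltW.
have c0 : c != 0 by rewrite sqrtr_eq0 -ltNge.
set r := \sum_b B i b * v b 0.
set t := r / B i i.
have -> : qf (chol_step B i) v = qf B v - r * r / B i i.
  rewrite !qfE.
  under eq_bigr => b _.
    under eq_bigr => a _ do rewrite stepE mulrBr.
    rewrite sumrB mulrBl.
  over.
  rewrite sumrB; congr (_ - _).
  transitivity (\sum_b (\sum_a v a 0 * B i a) * (B i b * v b 0) / c ^+ 2).
    apply: eq_bigr => b _; rewrite !mulr_suml; apply: eq_bigr => a _.
    by rewrite -/c; field.
  rewrite -!mulr_suml -mulr_sumr c2; congr (_ * _ / _).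
  by rewrite /r; apply: eq_bigr => a _; rewrite mulrC.
have -> : qf B (\col_a (v a 0 - (a == i)%:R * t)) = qf B v - t * r - t * r + t * t * B i i.
  rewrite !qfE.
  under eq_bigr => b _.
    under eq_bigr => a _ do rewrite mxE mulrBl -mulrA.
    rewrite sumrB sum_delta mxE.
    have -> : forall X Y Z W T : R, (X - T * Y) * (Z - W * T) =
       X * Z - T * (X * W) - T * (Y * Z) + T * T * (Y * W) by move=> *; ring.
  over.
  rewrite big_split /= !sumrB -!mulr_sumr !sum_delta' /=.
  have -> : \sum_a v a 0 * B a i = r.
    by rewrite /r; apply: eq_bigr => a _; rewrite mulrC Bs.
  by [].
rewrite /t; field.
by rewrite gt_eqF.
Qed.

Variable s : 'S_n.

Definition Inv (B : 'M[R]_n) (k : nat) : Prop :=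
  B^T = B /\
  (forall v : 'cV[R]_n, (exists m : 'I_n, (k <= m)%N /\ v (s m) 0 != 0) -> 0 < qf B v) /\
  (forall m : 'I_n, (m < k)%N -> forall j, B (s m) j = 0).

Lemma inv_step B (kk : 'I_n) : Inv B kk ->
  0 < B (s kk) (s kk) /\ Inv (chol_step B (s kk)) kk.+1.
Proof.
move=> [sB [pB zB]].
have Bs a b : B a b = B b a by rewrite -{1}sB mxE.
set i := s kk.
have pos : 0 < B i i.
  have := pB (delta_mx i 0).
  rewrite qfE.
  under eq_bigr => b _.
    under eq_bigr => a _ do rewrite mxE andbT.
    rewrite sum_delta mxE andbT.
  over.
  rewrite sum_delta'; apply; exists kk; rewrite leqnn mxE !eqxx /=.
  split=> //; exact: oner_neq0.
split=> //.
set c := Num.sqrt (B i i).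
have c2 : c ^+ 2 = B i i by rewrite sqr_sqrtr // ltW.
have c0 : c != 0 by rewrite sqrtr_eq0 -ltNge.
split; last split.
- apply/matrixP => a b; rewrite mxE !stepE -/c Bs.
  by rewrite [B i a / c * _]mulrC.
- move=> v [m [km vm]].
  rewrite qf_step //; apply: pB; exists m; split; first exact: ltnW.
  rewrite mxE.
  have -> : (s m == i) = false.
    apply/negbTE; rewrite /i (inj_eq perm_inj); apply/eqP => e.
    by move: km; rewrite e ltnn.
  by rewrite mul0r subr0.
- move=> m; rewrite ltnS leq_eqVlt => /orP [/eqP e | lt] j; rewrite stepE -/c.
  + have -> : s m = i by rewrite /i; congr (s _); apply: val_inj.
    rewrite -c2; field; exact: c0.
  + by rewrite zB // [B i (s m)]Bs zB // !mul0r subr0.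
Qed.

Variable A : 'M[R]_n.
Definition F (k : nat) := chol_mat A (take k [seq s i | i <- enum 'I_n]).

Lemma F_succ (kk : 'I_n) : F kk.+1 = chol_step (F kk) (s kk).
Proof.
rewrite /F (take_nth (s kk)); last by rewrite size_map size_enum_ord.
rewrite /chol_mat foldl_rcons; congr (chol_step _ _).
by rewrite (nth_map kk) ?size_enum_ord // nth_ord_enum.
Qed.

Lemma inv_all : sym_mx A -> posdef_mx A -> forall k, (k <= n)%N -> Inv (F k) k.
Proof.
move=> sA pA; elim=> [_|k IH kn].
  rewrite /F take0 /=; split=> //; split=> // v [m [_ vm]].
  apply: pA; apply/eqP => v0; move: vm; by rewrite v0 mxE eqxx.
have := @inv_step (F k) (Ordinal kn) (IH (ltnW kn)).
by rewrite -(F_succ (Ordinal kn)) => -[].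
Qed.
End Aux.

Lemma cs_sum (R : realType) (m : nat) (a : 'I_m -> R) :
  (\sum_j a j) ^+ 2 <= m%:R * \sum_j a j ^+ 2.
Proof.
rewrite expr2 mulr_suml.
under eq_bigr do rewrite mulr_sumr.
apply: (@le_trans _ _ (\sum_i \sum_j (a i ^+ 2 + a j ^+ 2) / 2)).
  apply: ler_sum => i _; apply: ler_sum => j _.
  have := sqr_ge0 (a i - a j); rewrite sqrrB -mulr_natr => h.
  lra.
under eq_bigr do rewrite -mulr_suml big_split /= sumr_const card_ord.
rewrite -mulr_suml big_split /= sumr_const card_ord -sumrMnl.
rewrite -mulr2n -[_ *+ 2]mulr_natr mulfK; last by rewrite pnatr_eq0.
by rewrite mulr_natl sumrMnl.
Qed.

Theorem proposition2 (R : realType) (n : nat) (A : 'M[R]_n) (s : 'S_n) :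
  sym_mx A -> posdef_mx A ->
  let Ak := fun k : 'I_n => chol_mat A (take k [seq s i | i <- enum 'I_n]) in
  let x := fun k : 'I_n => chol_vec (Ak k) (s k) in
  (forall k : 'I_n, 0 < Ak k (s k) (s k)) /\
  \sum_(k < n) x k *m (x k)^T = A /\
  \sum_(k < n) l1norm (x k) ^+ 2 <= n%:R * \tr A.
Proof.
move=> sA pA Ak x.
have IA := @inv_all R n s A sA pA.
have xx (k : 'I_n) : x k *m (x k)^T = @F R n s A k - @F R n s A k.+1.
  by rewrite F_succ /chol_step opprB addrC subrK.
have Fn : @F R n s A n = 0.
  have [_ [_ zB]] := IA n (leqnn n).
  apply/matrixP => a b; rewrite mxE -(permKV s a); exact: zB.
have sum2 : \sum_(k < n) x k *m (x k)^T = A.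
  rewrite (eq_bigr _ (fun k _ => xx k)).
  rewrite -(big_mkord xpredT (fun k => @F R n s A k - @F R n s A k.+1)).
  under eq_bigr do rewrite -opprB.
  by rewrite sumrN telescope_sumr // Fn sub0r opprK /F take0.
split; last split => //.
  move=> k; have := @inv_step R n s (@F R n s A k) k (IA k (ltnW (ltn_ord k))).
  by case.
have trA : \tr A = \sum_(k < n) \sum_j x k j 0 ^+ 2.
  rewrite -{1}sum2 /mxtrace.
  under eq_bigr do rewrite summxE.
  rewrite exchange_big; apply: eq_bigr => k _; apply: eq_bigr => j _.
  by rewrite !mxE big_ord1 !mxE expr2.
rewrite trA mulr_sumr; apply: ler_sum => k _; rewrite /l1norm.
apply: (le_trans (@cs_sum R n (fun j => `|x k j 0|))).
rewrite le_eqVlt; apply/orP; left; apply/eqP; congr (_ * _).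
by apply: eq_bigr => j _; exact: real_normK (num_real _).
Qed.
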